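(* Let $\varepsilon\in\{-1,1\}$, let $M(\phi,\xi,\eta,g_M)$ be a Lorentzian almost (para)contact manifold of dimension $2m+1$, let $(N,g_N)$ be a semi-Riemannian manifold of dimension $n$, and let $F:M\to N$ be an anti-invariant semi-Riemannian submersion such that $\phi(\ker F_* )=(\ker F_* )^\perp$. Then $\xi$ is vertical and $m=n$. Moreover, $N$ is a Riemannian manifold.
   Context: A Lorentzian almost contact ($\varepsilon=-1$), resp. almost paracontact ($\varepsilon=1$), manifold is a $(2m+1)$-dimensional manifold $M$ with Lorentzian metric $g_M$, $(1,1)$-tensor $\phi$, vector field $\xi$ and $1$-form $\eta$ with $\phi^2X=\varepsilon X+\eta(X)\xi$, $g_M(\phi X,\phi Y)=g_M(X,Y)+\eta(X)\eta(Y)$, $\eta(X)=\varepsilon g_M(X,\xi)$, $\eta(\xi)=-\varepsilon$. A semi-Riemannian submersion $F:M\to N$ is a submersion with nondegenerate fibres such that $F_*$ is an isometry from $(\ker F_* )^\perp$ onto $TN$; it is anti-invariant if $\phi(\ker F_* )\subseteq(\ker F_* )^\perp$. $\xi$ vertical means $\xi$ takes values in $\ker F_*$. A Riemannian manifold has positive definite metric. *)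

(* Defs.v *)
(* Pointwise (tangent-space) model of semi-Riemannian
   manifolds and submersions. *)
From HB Require Import structures.
From mathcomp Require Import all_boot all_order all_algebra.
From mathcomp Require Import reals.
Set Implicit Arguments. Unset Strict Implicit. Unset Printing Implicit Defensive.
Import Order.TTheory GRing.Theory Num.Theory.
Local Open Scope ring_scope.

Section Defs.
Variable R : realType.

Definition bil (d : nat) (G : 'M[R]_d) (u v : 'rV[R]_d) : R := (u *m G *m v^T) 0 0.

Definition sig_mx (d k : nat) : 'M[R]_d :=
  diag_mx (\row_(i < d) if (i < k)%N then -1 else 1).

Definition has_index (d : nat) (G : 'M[R]_d) (k : nat) : Prop :=
  G^T = G /\ (k <= d)%N /\
  exists P : 'M[R]_d, P \in unitmx /\ P *m G *m P^T = sig_mx d k.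

Definition pos_def (d : nat) (G : 'M[R]_d) : Prop :=
  forall v : 'rV[R]_d, v != 0 -> 0 < bil G v v.

(* (N, gN): semi-Riemannian manifold of dimension n: at each point the metric
   is a nondegenerate symmetric form on T_qN = R^n, of constant index. *)
Definition semi_riemannian (N : Type) (n : nat) (gN : N -> 'M[R]_n) : Prop :=
  exists nu : nat, forall q, has_index (gN q) nu.

Definition riemannian (N : Type) (n : nat) (gN : N -> 'M[R]_n) : Prop :=
  forall q, (gN q)^T = gN q /\ pos_def (gN q).

(* Lorentzian almost contact (eps = -1) / paracontact (eps = 1) structure,
   tangent spaces T_pM = R^(2m+1); phi acts on the right: phi X = X *m Phi p *)
Definition lorentzian_almost_paracontact (M : Type) (eps : R) (m : nat)
  (g : M -> 'M[R]_(2 * m + 1)) (Phi : M -> 'M[R]_(2 * m + 1))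
  (xi : M -> 'rV[R]_(2 * m + 1)) (eta : M -> 'rV[R]_(2 * m + 1) -> R) : Prop :=
  forall p,
    has_index (g p) 1 /\
    (forall X, X *m Phi p *m Phi p = eps *: X + eta p X *: xi p) /\
    (forall X Y, bil (g p) (X *m Phi p) (Y *m Phi p)
                 = bil (g p) X Y + eta p X * eta p Y) /\
    (forall X, eta p X = eps * bil (g p) X (xi p)) /\
    eta p (xi p) = - eps.

Definition vertical (M : Type) (d n : nat) (dF : M -> 'M[R]_(d, n))
  (p : M) (u : 'rV[R]_d) : Prop := u *m dF p = 0.

Definition horizontal (M : Type) (d n : nat) (g : M -> 'M[R]_d)
  (dF : M -> 'M[R]_(d, n)) (p : M) (u : 'rV[R]_d) : Prop :=
  forall v, vertical dF p v -> bil (g p) u v = 0.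

Definition semi_riemannian_submersion (M N : Type) (d n : nat)
  (gM : M -> 'M[R]_d) (gN : N -> 'M[R]_n) (F : M -> N)
  (dF : M -> 'M[R]_(d, n)) : Prop :=
  forall p,
    row_full (dF p) /\
    (forall u, vertical dF p u ->
       (forall v, vertical dF p v -> bil (gM p) u v = 0) -> u = 0) /\
    (forall u w, horizontal gM dF p u -> horizontal gM dF p w ->
       bil (gN (F p)) (u *m dF p) (w *m dF p) = bil (gM p) u w) /\
    (forall y : 'rV[R]_n, exists2 u, horizontal gM dF p u & u *m dF p = y).

Definition anti_invariant (M : Type) (d n : nat) (gM : M -> 'M[R]_d)
  (Phi : M -> 'M[R]_d) (dF : M -> 'M[R]_(d, n)) : Prop :=
  forall p v, vertical dF p v -> horizontal gM dF p (v *m Phi p).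

Definition phi_vert_eq_horiz (M : Type) (d n : nat) (gM : M -> 'M[R]_d)
  (Phi : M -> 'M[R]_d) (dF : M -> 'M[R]_(d, n)) : Prop :=
  forall p,
    (forall v, vertical dF p v -> horizontal gM dF p (v *m Phi p)) /\
    (forall h, horizontal gM dF p h ->
       exists2 v, vertical dF p v & v *m Phi p = h).

End Defs.

(* Main.v *)
Require Import Defs.
From HB Require Import structures.
From mathcomp Require Import all_boot all_order all_algebra.
From mathcomp Require Import reals.
From mathcomp Require Import ring lra zify.
Set Implicit Arguments. Unset Strict Implicit. Unset Printing Implicit Defensive.
Import Order.TTheory GRing.Theory Num.Theory.
Local Open Scope ring_scope.

Section Aux.
Variable R : realType.
Implicit Types (d : nat).

Lemma bilDl d (G : 'M[R]_d) u v w : bil G (u + v) w = bil G u w + bil G v w.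
Proof. by rewrite /bil !mulmxDl mxE. Qed.
Lemma bilDr d (G : 'M[R]_d) u v w : bil G w (u + v) = bil G w u + bil G w v.
Proof. by rewrite /bil linearD /= mulmxDr mxE. Qed.
Lemma bilZl d (G : 'M[R]_d) a u w : bil G (a *: u) w = a * bil G u w.
Proof. by rewrite /bil -!scalemxAl mxE. Qed.
Lemma bilZr d (G : 'M[R]_d) a u w : bil G w (a *: u) = a * bil G w u.
Proof. by rewrite /bil linearZ /= -scalemxAr mxE. Qed.
Lemma bilNl d (G : 'M[R]_d) u w : bil G (- u) w = - bil G u w.
Proof. by rewrite -scaleN1r bilZl mulN1r. Qed.
Lemma bilNr d (G : 'M[R]_d) u w : bil G w (- u) = - bil G w u.
Proof. by rewrite -scaleN1r bilZr mulN1r. Qed.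
Lemma bil0l d (G : 'M[R]_d) w : bil G 0 w = 0.
Proof. by rewrite /bil !mul0mx mxE. Qed.
Lemma bil0r d (G : 'M[R]_d) w : bil G w 0 = 0.
Proof. by rewrite /bil trmx0 mulmx0 mxE. Qed.
Lemma bil_sym d (G : 'M[R]_d) u v : G^T = G -> bil G u v = bil G v u.
Proof.
move=> sG; rewrite /bil.
transitivity (((u *m G *m v^T)^T) 0 0); first by rewrite [RHS]mxE.
by rewrite !trmx_mul trmxK sG mulmxA.
Qed.
Lemma bilP d (G P : 'M[R]_d) y z :
  bil G (y *m P) (z *m P) = bil (P *m G *m P^T) y z.
Proof. by rewrite /bil trmx_mul !mulmxA. Qed.

Lemma bil_nondeg d (G : 'M[R]_d) u : G \in unitmx ->
  (forall x, bil G u x = 0) -> u = 0.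
Proof.
move=> uG H.
have uG0 : u *m G = 0.
  apply/rowP => j; have := H (delta_mx 0 j).
  by rewrite /bil trmx_delta -colE !mxE => ->.
by rewrite -(mulmxK uG u) uG0 mul0mx.
Qed.

Lemma sig_unit d k : sig_mx R d k \in unitmx.
Proof.
rewrite unitmxE /sig_mx det_diag unitfE; apply/prodf_neq0 => i _.
rewrite mxE; case: ifP => _; rewrite ?oppr_eq0 oner_eq0 //.
Qed.

Lemma index_unit d (G : 'M[R]_d) k : has_index G k -> G \in unitmx.
Proof.
case=> _ [_ [P [uP E]]].
have := sig_unit d k; rewrite -E !unitmx_mul.
by case/andP=> /andP[].
Qed.

Lemma sig_quad d k (y : 'rV[R]_d) :
  bil (sig_mx R d k) y y = \sum_j y 0 j ^+ 2 * (if (j < k)%N then -1 else 1).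
Proof.
rewrite /bil mul_mx_diag mxE; apply: eq_bigr => j _.
by rewrite !mxE expr2; ring.
Qed.


Lemma sqsum_ge0 d (y : 'rV[R]_d) : 0 <= \sum_j y 0 j ^+ 2.
Proof. by apply: sumr_ge0 => j _; exact: sqr_ge0. Qed.

Lemma sqsum_eq0 d (y : 'rV[R]_d) : \sum_j y 0 j ^+ 2 = 0 -> y = 0.
Proof.
move=> H; apply/rowP => j; rewrite mxE.
have := psumr_eq0P (P := predT) (F := fun j => y 0 j ^+ 2) (fun i _ => sqr_ge0 _) H; move/(_ j isT).
by move/eqP; rewrite sqrf_eq0 => /eqP.
Qed.

Lemma arith1 (A B zz yy : R) : 0 <= zz -> 0 < yy -> A <= 0 -> B < 0 ->
  0 <= zz * A + yy * B -> False.
Proof. move=> *; nra. Qed.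

Lemma lorentz d (G : 'M[R]_d) (xi w : 'rV[R]_d) : has_index G 1 ->
  bil G xi xi < 0 -> bil G w xi = 0 -> bil G w w <= 0 -> w = 0.
Proof.
move=> [sG [k1 [P [uP E]]]] Hxx Hwx Hww.
have d0 : (0 < d)%N by [].
pose i0 : 'I_d := Ordinal d0.
pose Q := invmx P.
have key : forall x, bil G x x =
    \sum_j (x *m Q) 0 j ^+ 2 * (if (j < 1)%N then -1 else 1).
  by move=> x; rewrite -{1 2}(mulmxKV uP x) bilP E sig_quad.
have Lpos : forall x, (x *m Q) 0 i0 = 0 ->
    0 <= bil G x x /\ (bil G x x = 0 -> x = 0).
  move=> x hx; rewrite key.
  have -> : \sum_j (x *m Q) 0 j ^+ 2 * (if (j < 1)%N then -1 else 1)
        = \sum_j (x *m Q) 0 j ^+ 2.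
    apply: eq_bigr => j _; case: ifP => j0; last by rewrite mulr1.
    have -> : j = i0 by apply/val_inj => /=; move: j0; rewrite ltnS leqn0 => /eqP.
    by rewrite hx expr0n mul0r.
  split; first exact: sqsum_ge0.
  by move/sqsum_eq0 => h0; rewrite -(mulmxKV uP x) -/Q h0 mul0mx.
pose y0 := (w *m Q) 0 i0; pose z0 := (xi *m Q) 0 i0.
have z0n : z0 != 0.
  apply/eqP => z00; have [h _] := Lpos xi z00.
  by move: (lt_le_trans Hxx h); rewrite ltxx.
pose u := z0 *: w - y0 *: xi.
have uQ : (u *m Q) 0 i0 = 0.
  by rewrite /u /y0 /z0 mulmxBl -!scalemxAl !mxE; ring.
have Huu : bil G u u = z0 ^+ 2 * bil G w w + y0 ^+ 2 * bil G xi xi.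
  rewrite /u !(bilDl, bilDr, bilNl, bilNr, bilZl, bilZr).
  rewrite (bil_sym xi w sG) Hwx; ring.
have [h1 h2] := Lpos u uQ.
have y00 : y0 = 0.
  apply/eqP; apply: contraT => y0n.
  have : 0 < y0 ^+ 2 by rewrite lt_def sqrf_eq0 y0n sqr_ge0.
  have : 0 <= z0 ^+ 2 by exact: sqr_ge0.
  move: h1; rewrite Huu => h1 a b; exfalso; exact: (arith1 a b Hww Hxx h1).
have : bil G u u = 0.
  apply/eqP; rewrite eq_le h1 andbT Huu y00 expr0n mul0r addr0.
  by rewrite mulr_ge0_le0 ?sqr_ge0.
move/h2; rewrite /u y00 scale0r subr0 => /eqP; rewrite scaler_eq0 (negPf z0n).
by move/eqP.
Qed.


Lemma arith2 (e : R) : e = 1 \/ e = -1 -> e * e = 1.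
Proof. by case=> ->; rewrite ?mulr1 ?mulrNN ?mulr1. Qed.

Lemma entry_trT d (X : 'rV[R]_d) (K : 'M[R]_d) j :
  (X *m K^T) 0 j = (X *m (row j K)^T) 0 0.
Proof. by rewrite !mxE; apply: eq_bigr => k _; rewrite !mxE. Qed.

Lemma point_facts d n (G Ph : 'M[R]_d) (xi : 'rV[R]_d) (et : 'rV[R]_d -> R)
  (eps : R) (A : 'M[R]_(d, n)) (gNq : 'M[R]_n) :
  (eps = 1 \/ eps = -1) -> has_index G 1 ->
  (forall X, X *m Ph *m Ph = eps *: X + et X *: xi) ->
  (forall X Y, bil G (X *m Ph) (Y *m Ph) = bil G X Y + et X * et Y) ->
  (forall X, et X = eps * bil G X xi) ->
  et xi = - eps ->
  row_full A ->
  (forall u, u *m A = 0 -> (forall v, v *m A = 0 -> bil G u v = 0) -> u = 0) ->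
  (forall u w, (forall v, v *m A = 0 -> bil G u v = 0) ->
      (forall v, v *m A = 0 -> bil G w v = 0) ->
      bil gNq (u *m A) (w *m A) = bil G u w) ->
  (forall y : 'rV[R]_n, exists2 u, (forall v, v *m A = 0 -> bil G u v = 0) & u *m A = y) ->
  (forall v, v *m A = 0 -> (forall v', v' *m A = 0 -> bil G (v *m Ph) v' = 0)) ->
  (forall h, (forall v, v *m A = 0 -> bil G h v = 0) ->
      exists2 v, v *m A = 0 & v *m Ph = h) ->
  xi *m A = 0 /\ d = (2 * n + 1)%N /\ (forall y, y != 0 -> 0 < bil gNq y y).
Proof.
move=> Heps LG LPhi Lmet Leta Lxi rfA nondeg iso surj anti veq.
have ee : eps * eps = 1 by exact: arith2.
have e0 : eps != 0 by apply/eqP => e0; move: ee; rewrite e0 mul0r => /eqP; rewrite eq_sym oner_eq0.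
have sG : G^T = G by case: LG.
have uG : G \in unitmx by exact: index_unit LG.
have xi0 : xi != 0.
  apply/eqP => x0; move: Lxi; rewrite Leta x0 bil0l mulr0 => /eqP.
  by rewrite eq_sym oppr_eq0 (negPf e0).
have bxx : bil G xi xi = -1.
  have := Lxi; rewrite Leta => h.
  have : eps * (eps * bil G xi xi) = eps * - eps by rewrite h.
  by rewrite mulrA ee mul1r mulrN ee.
have kerPh : forall x, x *m Ph = 0 -> x = (- (eps * et x)) *: xi.
  move=> x hx; have := LPhi x; rewrite hx mul0mx => h.
  have : eps *: (eps *: x + et x *: xi) = 0 by rewrite -h scaler0.
  rewrite scalerDr scalerA ee scale1r scalerA => /eqP; rewrite addr_eq0 => /eqP hx'.
  by rewrite {1}hx' scaleNr.
have xiPh : xi *m Ph = 0.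
  pose z := xi *m Ph.
  have zPh : z *m Ph = 0 by rewrite /z LPhi Lxi scaleNr subrr.
  have hz := kerPh z zPh.
  move: zPh; rewrite {1}hz -scalemxAl -/z => /eqP; rewrite scaler_eq0 => /orP [/eqP c0|/eqP //].
  by rewrite hz c0 scale0r.
have etPh : forall X, et (X *m Ph) = 0.
  move=> X; have h1 := LPhi (X *m Ph).
  have : X *m Ph *m Ph *m Ph = eps *: (X *m Ph) by rewrite (LPhi X) mulmxDl -!scalemxAl xiPh scaler0 addr0.
  rewrite h1 => /eqP; rewrite -subr_eq0 addrC addKr => /eqP /eqP.
  by rewrite scaler_eq0 (negPf xi0) orbF => /eqP.
have bPhxi : forall X, bil G (X *m Ph) xi = 0.
  move=> X; have := etPh X; rewrite Leta => /eqP; rewrite mulf_eq0 (negPf e0) /=.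
  by move/eqP.
pose K := kermx A; pose B := G *m K^T; pose H := kermx B.
have vertK : forall v : 'rV[R]_d, v *m A = 0 <-> (v <= K)%MS.
  by move=> v; split => [/sub_kermxP|/sub_kermxP].
pose hz (h : 'rV[R]_d) := forall v, v *m A = 0 -> bil G h v = 0.
have horH : forall h : 'rV[R]_d, hz h <-> (h <= H)%MS.
  move=> h; split.
  - move=> hh; apply/sub_kermxP; rewrite /B; apply/rowP => j.
    rewrite mulmxA entry_trT [RHS]mxE; apply: hh.
    by rewrite -row_mul mulmx_ker row0.
  - move/sub_kermxP => hB v /vertK /submxP [D ->].
    by rewrite /bil trmx_mul mulmxA -(mulmxA h G) hB mul0mx mxE.
have rA : \rank A = n by apply/eqP.
have nd : (n <= d)%N by rewrite -rA rank_leq_row.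
have rK : \rank K = (d - n)%N by rewrite mxrank_ker rA.
have rH : \rank H = n.
  by rewrite mxrank_ker /B eqmxMfull ?row_full_unit // mxrank_tr rK subKn.
have capr : \rank (K :&: H)%MS = 0%N.
  apply/eqP; rewrite mxrank_eq0 -submx0; apply/row_subP => i.
  set r := row i _.
  have r1 : (r <= K)%MS by apply: submx_trans (row_sub _ _) (capmxSl _ _).
  have r2 : (r <= H)%MS by apply: submx_trans (row_sub _ _) (capmxSr _ _).
  move/vertK: r1 => r1; move/horH: r2 => r2.
  by rewrite (nondeg r r1 r2) sub0mx.
have sumfull : row_full (K + H)%MS.
  have := mxrank_sum_cap K H; rewrite capr rK rH addn0 subnK //.
  by move=> h; rewrite /row_full h.
have decomp : forall x, exists v h, [/\ x = v + h, v *m A = 0 & hz h].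
  move=> x; have : (x <= K + H)%MS by exact: submx_full.
  case/sub_addsmxP => [[a b]] /= ->; exists (a *m K), (b *m H); split => //.
    by rewrite -mulmxA mulmx_ker mulmx0.
  by apply/horH; exact: submxMl.
have hzPh : forall h, hz h -> bil G h xi = 0.
  by move=> h /veq [w _ <-]; exact: bPhxi.
have xiv : xi *m A = 0.
  have [v [h [Exi hv hh]]] := decomp xi.
  have hdef : h = xi - v by rewrite Exi addrC addKr.
  suff h0 : h = 0 by rewrite Exi h0 addr0.
  apply: (bil_nondeg uG) => x.
  have [v' [h' [-> hv' hh']]] := decomp x.
  rewrite bilDr hh // add0r (bil_sym h h' sG) hdef bilDr bilNr hzPh // hh' //.
  by rewrite oppr0 addr0.
split => //; split.
  have e1 : (K *m Ph == H)%MS.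
    apply/andP; split.
      apply/row_subP => i; rewrite row_mul; apply/horH; apply: anti.
      by apply/vertK; exact: row_sub.
    apply/row_subP => i.
    have hh : hz (row i H) by apply/horH; exact: row_sub.
    case: (veq _ hh) => v /vertK hv <-; exact: submxMr.
  have e2 : ((K :&: kermx Ph)%MS == xi)%MS.
    apply/andP; split.
      apply/row_subP => i; set r := row i _.
      have rk : (r <= kermx Ph)%MS by apply: submx_trans (row_sub _ _) (capmxSr _ _).
      move/sub_kermxP: rk => rPh.
      by rewrite (kerPh r rPh) scalemx_sub // submx_refl.
    rewrite sub_capmx; apply/andP; split; first by apply/vertK.
    by apply/sub_kermxP.
  have := mxrank_mul_ker K Ph.
  rewrite (eqmx_rank e1) (eqmx_rank e2) rank_rV xi0 rK rH /= => h.
  lia.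
move=> y y0; have [u hu uy] := surj y.
have u0 : u != 0 by apply: contraNneq y0 => u0; rewrite -uy u0 mul0mx.
rewrite -uy iso //.
have [v hv vu] := veq u hu.
pose a := - bil G v xi.
pose w := v - a *: xi.
have bwx : bil G w xi = 0.
  rewrite /w bilDl bilNl bilZl; move: bxx => /= ->; rewrite /a; ring.
have bww : bil G u u = bil G w w.
  rewrite -vu Lmet !Leta /w !(bilDl, bilDr, bilNl, bilNr, bilZl, bilZr).
  rewrite (bil_sym xi v sG) bxx /a.
  apply: (@eq_trans _ _ ((eps * eps) * bil G v xi ^+ 2 + bil G v v)); first by ring.
  rewrite ee; ring.
rewrite bww ltNge; apply/negP => hw.
have bxl : bil G xi xi < 0 by rewrite bxx ltrN10.
have w0 := lorentz LG bxl bwx hw.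
move: u0; rewrite -vu.
have -> : v = a *: xi by apply/eqP; rewrite -subr_eq0 -/w w0.
by rewrite -scalemxAl xiPh scaler0 eqxx.
Qed.

End Aux.

Theorem mainTheorem13 (R : realType) (eps : R) (m n : nat)
  (M N : Type) (p0 : M)
  (gM : M -> 'M[R]_(2 * m + 1)) (Phi : M -> 'M[R]_(2 * m + 1))
  (xi : M -> 'rV[R]_(2 * m + 1)) (eta : M -> 'rV[R]_(2 * m + 1) -> R)
  (gN : N -> 'M[R]_n) (F : M -> N) (dF : M -> 'M[R]_(2 * m + 1, n)) :
  (eps = 1 \/ eps = -1) ->
  lorentzian_almost_paracontact eps gM Phi xi eta ->
  semi_riemannian gN ->
  semi_riemannian_submersion gM gN F dF ->
  anti_invariant gM Phi dF ->
  phi_vert_eq_horiz gM Phi dF ->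
  (forall p, vertical dF p (xi p)) /\ m = n /\ riemannian gN.
Proof.
move=> Heps LAP [nu Hnu] SRS AI PVH.
have PF : forall p, xi p *m dF p = 0 /\ (2 * m + 1 = 2 * n + 1)%N /\
    (forall y, y != 0 -> 0 < bil (gN (F p)) y y).
  move=> p; have [LG [LPhi [Lmet [Leta Lxi]]]] := LAP p.
  have [rf [nd [iso surj]]] := SRS p; have [anti veq] := PVH p.
  exact: (point_facts Heps LG LPhi Lmet Leta Lxi rf nd iso surj anti veq).
split; first by move=> p; case: (PF p).
have [_ [hmn pd0]] := PF p0.
split; first lia.
have nu0 : nu = 0%N.
  apply/eqP; apply: contraT => nun.
  have [_ [nuln [P0 [uP0 E0]]]] := Hnu (F p0).
  have n0 : (0 < n)%N by move: nun; rewrite -lt0n => h; exact: leq_trans h nuln.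
  pose i0 : 'I_n := Ordinal n0.
  pose x := (delta_mx (0 : 'I_1) i0 : 'rV[R]_n) *m P0.
  have x0 : x != 0.
    apply/eqP => x0.
    have : delta_mx 0 i0 = x *m invmx P0 by rewrite /x mulmxK.
    rewrite x0 mul0mx => /matrixP /(_ 0 i0); rewrite !mxE !eqxx /=.
    by move/eqP; rewrite oner_eq0.
  have := pd0 x x0; rewrite /x bilP E0 /bil trmx_delta -rowE -colE !mxE eqxx mulr1n.
  have -> : (i0 < nu)%N by rewrite /= lt0n.
  by rewrite ltr0N1.
move=> q; have [sq [_ [P [uP E]]]] := Hnu q; split => // v v0.
pose y := v *m invmx P.
have vy : v = y *m P by rewrite /y mulmxKV.
have y0 : y != 0 by apply: contraNneq v0 => y0; rewrite vy y0 mul0mx.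
rewrite vy bilP E nu0 sig_quad.
have -> : \sum_j y 0 j ^+ 2 * (if (j < 0)%N then -1 else 1) = \sum_j y 0 j ^+ 2.
  by apply: eq_bigr => j _; rewrite mulr1.
rewrite lt_def sqsum_ge0 andbT; apply: contra y0 => /eqP h.
by rewrite (sqsum_eq0 h).
Qed.
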